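(* Let $1\le l\le r$ and consider a canonical noiseless MMV model $B=AX$ in which $A$ satisfies $0\le\delta^L_{2k-r+l}(A)<1$ and the nonzero rows of $X$ are in general position. Let $I\subset\{1,\dots,n\}$ satisfy $|I|\le\min(2(k-r)+l,\,k)$, $|I\setminus\operatorname{supp}X|\le k-r+l$ and $|I\cap\operatorname{supp}X|\ge k-r+1$. Then for every $j\in I$, the following are equivalent: (a) $j\in\operatorname{supp}X$; (b) $\operatorname{rank}[A_{I\setminus\{j\}}~B]=\operatorname{rank}[A_I~B]$; (c) $\mathbf a_j^{*}P^\perp_{R([A_{I\setminus\{j\}}~B])}\mathbf a_j=0$.
   Context: Canonical MMV setting: $m,n,r,k$ are positive integers with $r\le m<n$ and $r\le k$. $A\in\mathbb{R}^{m\times n}$ is the sensing matrix with columns $\mathbf a_1,\dots,\mathbf a_n$; $X\in\mathbb{R}^{n\times r}$ has rows $\mathbf x^1,\dots,\mathbf x^n$, $\operatorname{supp}X=\{i:\mathbf x^i\neq 0\}$ and $|\operatorname{supp}X|=k$; $B=AX\in\mathbb{R}^{m\times r}$ has full column rank $r$. For an index set $I$, $A_I$ is the submatrix of $A$ formed by the columns indexed by $I$, and $[A_I~B]$ denotes horizontal concatenation. $R(M)$ is the column space of $M$, $P_{R(M)}$ the orthogonal projection onto it, and $P^\perp_{R(M)}=\mathrm{Id}-P_{R(M)}$; $^*$ denotes transpose. The lower restricted isometry constant $\delta^L_s(A)$ is the smallest $\delta\ge0$ such that $(1-\delta)\|\mathbf x\|_2^2\le\|A\mathbf x\|_2^2$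 for all $\mathbf x$ with at most $s$ nonzero entries. ''The nonzero rows of $X$ are in general position'' means any $r$ of the $k$ nonzero rows of $X$ are linearly independent. *)

(* Defs.v *)
From HB Require Import structures.
From mathcomp Require Import all_boot all_order all_algebra.
Set Implicit Arguments. Unset Strict Implicit. Unset Printing Implicit Defensive.
Import Order.TTheory GRing.Theory Num.Theory.
Local Open Scope ring_scope.

Section Defs.
Variable R : rcfType.

Definition sqnorm {p : nat} (x : 'cV[R]_p) : R := \sum_i x i 0 ^+ 2.

Definition sparse {p : nat} (s : nat) (x : 'cV[R]_p) : bool :=
  (#|[set i | x i ord0 != 0%R]| <= s)%N.

Definition lower_RIP_ok {m n : nat} (s : nat) (A : 'M[R]_(m, n)) (d : R) : Prop :=
  forall x : 'cV[R]_n, sparse s x -> (1 - d) * sqnorm x <= sqnorm (A *m x).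

Definition is_lower_RIC {m n : nat} (s : nat) (A : 'M[R]_(m, n)) (d : R) : Prop :=
  0 <= d /\ lower_RIP_ok s A d /\
  (forall d', 0 <= d' -> lower_RIP_ok s A d' -> d <= d').

Definition rsupp {n r : nat} (X : 'M[R]_(n, r)) : {set 'I_n} :=
  [set i | row i X != 0].

Definition colsubset {m n : nat} (A : 'M[R]_(m, n)) (I : {set 'I_n}) : 'M[R]_(m, #|I|) :=
  colsub (@enum_val _ (mem I)) A.

Definition rowsubset {n r : nat} (X : 'M[R]_(n, r)) (S : {set 'I_n}) : 'M[R]_(#|S|, r) :=
  rowsub (@enum_val _ (mem S)) X.

Definition rows_general_position {n r : nat} (X : 'M[R]_(n, r)) : Prop :=
  forall S : {set 'I_n}, S \subset rsupp X -> #|S| = r -> row_free (rowsubset X S).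

(* orthogonal projection onto the column space R(M):
   with C a matrix whose rows form a basis of R(M), P = C^T (C C^T)^{-1} C *)
Definition colspace_proj {m p : nat} (M : 'M[R]_(m, p)) : 'M[R]_m :=
  let C := row_base (M^T) in C^T *m invmx (C *m C^T) *m C.

Definition colspace_proj_perp {m p : nat} (M : 'M[R]_(m, p)) : 'M[R]_m :=
  1%:M - colspace_proj M.

End Defs.

(* Main.v *)
Require Import Defs.
From HB Require Import structures.
From mathcomp Require Import all_boot all_order all_algebra zify ring.
Import Order.TTheory GRing.Theory Num.Theory.
Local Open Scope ring_scope.

Section Aux.
Variable R : rcfType.

Lemma sqsumE (p : nat) (v : 'cV[R]_p) : (v^T *m v) 0 0 = \sum_i v i 0 ^+ 2.
Proof. by rewrite !mxE; apply: eq_bigr => i _; rewrite !mxE expr2. Qed.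

Lemma sqsum_eq0 (p : nat) (v : 'cV[R]_p) : ((v^T *m v) 0 0 == 0) = (v == 0).
Proof.
rewrite sqsumE; apply/idP/eqP; last first.
  by move=> ->; rewrite (eq_bigr (fun _ => 0)) ?big1 // => i _; rewrite mxE expr0n.
move/eqP=> H; apply/matrixP=> i j; rewrite (ord1 j) mxE.
have := psumr_eq0P (P := predT) (fun i _ => sqr_ge0 (v i 0)) H (erefl true : predT i).
by move/eqP; rewrite sqrf_eq0 => /eqP.
Qed.

Lemma proj_gen (k m : nat) (C : 'M[R]_(k, m)) (v : 'cV[R]_m) : row_free C ->
  ((v^T *m (1%:M - C^T *m invmx (C *m C^T) *m C) *m v) 0 0 == 0) = (v^T <= C)%MS.
Proof.
move=> Cfree.
set G := C *m C^T.
have GT : G^T = G by rewrite /G trmx_mul trmxK.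
have Gu : G \in unitmx.
  rewrite -row_free_unit; apply: inj_row_free => u Hu.
  have : ((u *m C)^T^T *m (u *m C)^T) 0 0 == 0.
    have -> : (u *m C)^T^T *m (u *m C)^T = u *m G *m u^T.
      by rewrite trmxK trmx_mul /G !mulmxA.
    by rewrite Hu !mul0mx mxE.
  rewrite sqsum_eq0 trmx_eq0 mulmx_free_eq0 //; exact/eqP.
set P := C^T *m invmx G *m C.
have PT : P^T = P by rewrite /P !trmx_mul trmxK trmx_inv GT mulmxA.
have PP : P *m P = P.
  by rewrite /P !mulmxA -(mulmxA _ C) -/G mulmxKV.
set Q := 1%:M - P.
have QQ : Q^T *m Q = Q.
  have QT : Q^T = Q.
    by rewrite /Q linearB /= trmx1 PT.
  by rewrite QT /Q mulmxBl !mulmxBr !mul1mx mulmx1 PP subrr subr0.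
have -> : v^T *m Q *m v = (Q *m v)^T *m (Q *m v).
  by rewrite -{1}QQ trmx_mul !mulmxA.
rewrite sqsum_eq0.
apply/idP/idP.
  rewrite /Q mulmxBl mul1mx subr_eq0 => /eqP Hv.
  by rewrite Hv trmx_mul PT /P !mulmxA submxMl.
case/submxP => w Hw; rewrite /Q mulmxBl mul1mx subr_eq0; apply/eqP.
apply: trmx_inj; rewrite trmx_mul PT Hw /P !mulmxA -(mulmxA w C) -/G mulmxK //.
Qed.

Lemma proj_perpP (m p : nat) (M : 'M[R]_(m, p)) (v : 'cV[R]_m) :
  ((v^T *m colspace_proj_perp M *m v) 0 0 == 0) = (v^T <= M^T)%MS.
Proof.
rewrite /colspace_proj_perp /colspace_proj proj_gen ?row_base_free //.
by rewrite eq_row_base.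
Qed.

Definition supp_in {n : nat} (J : {set 'I_n}) (y : 'cV[R]_n) :=
  forall i, y i 0 != 0 -> i \in J.

Lemma colsubset_memP (m n : nat) (A : 'M[R]_(m, n)) (J : {set 'I_n}) (v : 'cV[R]_m) :
  (exists w : 'cV_#|J|, v = colsubset A J *m w) <-> exists y, supp_in J y /\ v = A *m y.
Proof.
have -> : colsubset A J = A *m colsub (@enum_val _ (mem J)) 1%:M.
  by rewrite mulmx_colsub mulmx1.
split=> [[w ->]|[y [Hy ->]]].
  exists (colsub (@enum_val _ (mem J)) 1%:M *m w); split; last by rewrite mulmxA.
  move=> i; apply: contraR => Hi; rewrite mxE big1 // => k _.
  rewrite !mxE; case: eqP => [E|]; last by rewrite mul0r.
  by move: (enum_valP k); rewrite -E (negbTE Hi).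
exists (\col_k y (enum_val k) 0); rewrite -mulmxA; congr (_ *m _).
apply/matrixP=> i z; rewrite (ord1 z) mxE.
case: (boolP (i \in J)) => Hi.
  rewrite (bigD1 (enum_rank_in Hi i)) //= big1 ?addr0.
    by rewrite !mxE enum_rankK_in // eqxx mul1r.
  move=> k Hk; rewrite !mxE; case: eqP => [E|]; last by rewrite mul0r.
  move/negP: Hk; case; apply/eqP; apply: enum_val_inj; by rewrite enum_rankK_in.
rewrite big1; last first.
  move=> k _; rewrite !mxE; case: eqP => [E|]; last by rewrite mul0r.
  by move: (enum_valP k); rewrite -E (negbTE Hi).
by apply/eqP; apply: contraR Hi; apply: Hy.
Qed.

Lemma incolP (m p : nat) (M : 'M[R]_(m, p)) (v : 'cV[R]_m) :
  reflect (exists c, v = M *m c) (v^T <= M^T)%MS.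
Proof.
apply: (iffP submxP) => [[w Hw]|[c Hc]].
  by exists w^T; apply: trmx_inj; rewrite trmx_mul trmxK.
by exists c^T; rewrite Hc trmx_mul.
Qed.

Lemma rowmx_memP (m n r : nat) (A : 'M[R]_(m, n)) (B : 'M[R]_(m, r))
  (J : {set 'I_n}) (v : 'cV[R]_m) :
  (v^T <= (row_mx (colsubset A J) B)^T)%MS <->
  exists y c, supp_in J y /\ v = A *m y + B *m c.
Proof.
split.
  case/incolP=> c0; rewrite -[c0]vsubmxK mul_row_col => ->.
  have [y [Hy ->]] : exists y, supp_in J y /\ colsubset A J *m usubmx c0 = A *m y.
    by apply/colsubset_memP; exists (usubmx c0).
  by exists y, (dsubmx c0).
case=> y [c [Hy ->]].
have [w Hw] : exists w : 'cV_#|J|, A *m y = colsubset A J *m w.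
  by apply/colsubset_memP; exists y.
by apply/incolP; exists (col_mx w c); rewrite mul_row_col Hw.
Qed.

Lemma addcomb (p : nat) (a b c d : 'cV[R]_p) :
  a + c = a - (b + d) + b + (c + d).
Proof. by apply/matrixP => i z; rewrite !mxE; ring. Qed.

End Aux.

Lemma extend_set (T : finType) (A B : {set T}) (p : nat) :
  A \subset B -> (#|A| <= p)%N -> (p <= #|B|)%N ->
  exists C : {set T}, [/\ A \subset C, C \subset B & #|C| = p].
Proof.
move=> sAB; elim: p => [|p IH] hA hB.
  by exists A; split=> //; apply/eqP; rewrite -leqn0.
case: (ltngtP #|A| p.+1) => [lt|gt|eq]; last by exists A.
- have [C [sAC sCB cC]] := IH lt (ltnW hB).
  have : ~~ (B \subset C).
    by apply/negP => /subset_leq_card; rewrite cC; lia.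
  case/subsetPn => x xB xC.
  exists (x |: C); split.
  + by apply: subset_trans sAC (subsetUr _ _).
  + by rewrite subUset sub1set xB.
  + by rewrite cardsU1 xC cC.
- by move: hA; rewrite leqNgt gt.
Qed.

Theorem theorem3 (R : rcfType) (m n r k l : nat)
  (A : 'M[R]_(m, n)) (X : 'M[R]_(n, r)) (dL : R) (I : {set 'I_n})
  (h_rm : (r <= m)%N) (h_mn : (m < n)%N) (h_rk : (r <= k)%N)
  (h_l1 : (1 <= l)%N) (h_lr : (l <= r)%N)
  (h_k : #|rsupp X| = k)
  (h_B : \rank (A *m X) = r)
  (h_RIC : is_lower_RIC (2 * k - r + l) A dL) (h_dL : dL < 1)
  (h_gp : rows_general_position X)
  (h_I : (#|I| <= minn (2 * (k - r) + l) k)%N)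
  (h_Iout : (#|I :\: rsupp X| <= k - r + l)%N)
  (h_Iin : (k - r + 1 <= #|I :&: rsupp X|)%N) :
  forall j : 'I_n, j \in I ->
    [<-> j \in rsupp X;
         \rank (row_mx (colsubset A (I :\ j)) (A *m X))
           = \rank (row_mx (colsubset A I) (A *m X));
         ((col j A)^T *m colspace_proj_perp (row_mx (colsubset A (I :\ j)) (A *m X))
            *m col j A) 0 0 = 0].
Proof.
move=> j jI.
set S := rsupp X.
set B := A *m X.
set aj := col j A.
have ajE : aj = A *m delta_mx j 0 by rewrite /aj colE.
have memP := @rowmx_memP _ _ _ _ A B.
have Xcnz : forall (c : 'cV[R]_r) i, i \notin S -> (X *m c) i 0 = 0.
  move=> c i; rewrite /S /rsupp inE negbK => /eqP Hr.
  have := row_mul i X c; rewrite Hr mul0mx => /matrixP/(_ 0 0).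
  by rewrite [in X in X = _]mxE [in X in _ = X]mxE.
set Q := (aj^T <= (row_mx (colsubset A (I :\ j)) B)^T)%MS.
have hc : (aj^T *m colspace_proj_perp (row_mx (colsubset A (I :\ j)) B) *m aj) 0 0 = 0 <-> Q.
  split=> [H|H]; first by rewrite /Q -proj_perpP H.
  by apply/eqP; rewrite proj_perpP.
have sub_via : forall (J1 J2 : {set 'I_n}),
    (forall v : 'cV[R]_m, (v^T <= (row_mx (colsubset A J1) B)^T)%MS ->
               (v^T <= (row_mx (colsubset A J2) B)^T)%MS) ->
    ((row_mx (colsubset A J1) B)^T <= (row_mx (colsubset A J2) B)^T)%MS.
  move=> J1 J2 H; apply/row_subP=> i; rewrite -tr_col; apply: H.
  by apply/incolP; exists (delta_mx i 0); rewrite colE.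
have hb : (\rank (row_mx (colsubset A (I :\ j)) B) = \rank (row_mx (colsubset A I) B)) <-> Q.
  have s1 : ((row_mx (colsubset A (I :\ j)) B)^T <= (row_mx (colsubset A I) B)^T)%MS.
    apply: sub_via => v /memP [y [c [Hy ->]]]; apply/memP; exists y, c; split=> //.
    by move=> i /Hy; rewrite in_setD1 => /andP[].
  have [_ E] := mxrank_leqif_sup s1.
  rewrite !mxrank_tr in E.
  split=> [H|H].
    have HV : ((row_mx (colsubset A I) B)^T <= (row_mx (colsubset A (I :\ j)) B)^T)%MS.
      by rewrite -E; apply/eqP.
    apply: submx_trans HV; apply/memP; exists (delta_mx j 0), 0; split.
      move=> i; rewrite mxE; case: (i =P j) => [->|_] //=; by rewrite eqxx.
    by rewrite mulmx0 addr0 ajE.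
  apply/eqP; rewrite E.
  apply: sub_via => v /memP [y [c [Hy ->]]].
  move/memP: H => [y0 [c0 [Hy0 Haj]]].
  apply/memP.
  exists (y - y j 0 *: delta_mx j 0 + y j 0 *: y0), (c + y j 0 *: c0); split.
    move=> i; apply: contraR => Hi.
    have y0j : y0 j 0 = 0.
      by apply/eqP; apply/negPn/negP => /Hy0; rewrite !inE eqxx.
    case: (eqVneq i j) => [->|Hij].
      by rewrite !mxE eqxx /= y0j mulr1 mulr0 addr0 subrr.
    have HiI : i \notin I by move: Hi; rewrite !inE Hij.
    have yi : y i 0 = 0 by apply/eqP; apply/negPn/negP => /Hy; rewrite (negbTE HiI).
    have y0i : y0 i 0 = 0.
      by apply/eqP; apply/negPn/negP => /Hy0; rewrite !inE (negbTE HiI) andbF.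
    by rewrite !mxE (negbTE Hij) /= yi y0i !mulr0 subr0 addr0.
  rewrite !mulmxDr mulmxN -!scalemxAr -ajE Haj scalerDr.
  by rewrite (addcomb _ _ _ (y j 0 *: (A *m y0)) _ (y j 0 *: (B *m c0))).
have ha : j \in S <-> Q.
  split=> [jS|HQ].
    set T' := (I :&: S) :\ j.
    set Sm := S :\: T'.
    have jIS : j \in I :&: S by rewrite inE jI jS.
    have cT : #|T'| = (#|I :&: S| - 1)%N.
      by have := cardsD1 j (I :&: S); rewrite jIS /T' /= => E; rewrite [in RHS]E add1n subn1.
    have TS : T' \subset S.
      by apply/subsetP => i; rewrite /T' !inE => /and3P[_ _ ->].
    have cSm : #|Sm| = (k - #|T'|)%N by rewrite /Sm cardsD (setIidPr TS) h_k.
    have jSm : j \in Sm by rewrite /Sm /T' in_setD in_setD1 eqxx jS.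
    have [S2 [SmS2 S2S cS2]] : exists S2 : {set 'I_n},
        [/\ Sm \subset S2, S2 \subset S & #|S2| = r].
      apply: extend_set; first exact: subsetDl.
        by rewrite cSm cT; move: h_Iin; rewrite -/S; lia.
      by rewrite h_k.
    have fr := h_gp S2 S2S cS2.
    set X2 := rowsubset X S2.
    set e : 'cV[R]_#|S2| := \col_t ((enum_val t == j)%:R).
    have [c Hc] : exists c, X2 *m c = e.
      have full : row_full X2^T by rewrite /row_full mxrank_tr; exact: fr.
      case/submxP: (submx_full e^T full) => w Hw.
      by exists w^T; apply: trmx_inj; rewrite trmx_mul trmxK Hw.
    have Xc_S2 : forall i, i \in S2 -> (X *m c) i 0 = (i == j)%:R.
      move=> i Hi; move/matrixP: Hc => /(_ (enum_rank_in Hi i) 0).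
      rewrite !mxE enum_rankK_in // => <-.
      by apply: eq_bigr => t _; rewrite !mxE enum_rankK_in.
    apply/memP; exists (delta_mx j 0 - X *m c), c; split.
      have yE : forall i, (delta_mx j 0 - X *m c) i 0 = (i == j)%:R - (X *m c) i 0.
        by move=> i; rewrite mxE [in X in _ + X]mxE [delta_mx _ _ _ _]mxE eqxx andbT.
      move=> i; rewrite yE.
      case: (boolP (i \in S2)) => HiS2.
        by rewrite Xc_S2 // subrr eqxx.
      have : i \notin Sm by apply: contra HiS2; apply: (subsetP SmS2).
      rewrite /Sm inE negb_and negbK => /orP[iT|iS].
        by move: iT; rewrite /T' !inE => /and3P[-> ->].
      have Hij : i != j by apply: contraNneq iS => ->.
      by rewrite Xcnz // (negbTE Hij) subrr eqxx.
    by rewrite ajE mulmxBr /B mulmxA subrK.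
  apply: contraT => jS.
  move/memP: HQ => [y [c [Hy Haj]]].
  set z := delta_mx j 0 - y - X *m c.
  have Az : A *m z = 0.
    rewrite /z !mulmxBr -ajE Haj mulmxA -/B.
    by rewrite (addrC (A *m y)) addrK subrr.
  have yj : y j 0 = 0.
    by apply/eqP; apply/negPn/negP => /Hy; rewrite !inE eqxx.
  have zE : forall i, z i 0 = (i == j)%:R - y i 0 - (X *m c) i 0.
    by move=> i; rewrite /z !mxE eqxx andbT.
  have zj : z j 0 = 1.
    by rewrite zE eqxx /= yj (Xcnz c j jS) !subr0.
  have supp : [set i | z i ord0 != 0] \subset (I :\: S) :|: S.
    apply/subsetP => i; rewrite inE; apply: contraR; rewrite in_setU in_setD negb_or negb_and.
    case/andP => /orP[iI|iS'] iS; first by rewrite iS in iI.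
    have Hij : i != j by apply/eqP => Eij; move: iS'; rewrite Eij jI.
    have yi : y i 0 = 0.
      by apply/eqP; apply/negPn/negP => /Hy; rewrite in_setD1 (negbTE iS') andbF.
    by rewrite zE (negbTE Hij) /= yi (Xcnz c i iS) !subr0.
  have sp : sparse (2 * k - r + l) z.
    rewrite /sparse; apply: leq_trans (subset_leq_card supp) _.
    apply: leq_trans (leq_card_setU _ _).1 _.
    move: h_Iout; rewrite -/S.
    rewrite h_k => H; apply: leq_trans (leq_add H (leqnn k)) _; lia.
  have := h_RIC.2.1 z sp; rewrite Az.
  have -> : sqnorm (0 : 'cV[R]_m) = 0.
    by rewrite /sqnorm big1 // => i _; rewrite mxE expr0n.
  have pos : 1 <= sqnorm z.
    rewrite /sqnorm (bigD1 j) //= zj expr1n lerDl.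
    by apply: sumr_ge0 => i _; apply: sqr_ge0.
  have : 0 < (1 - dL) * sqnorm z.
    by apply: mulr_gt0; [rewrite subr_gt0 | apply: lt_le_trans pos].
  by move=> H1 H2; move: (lt_le_trans H1 H2); rewrite ltxx.
constructor; first by move/ha/hb.
constructor; first by move/hb/hc.
by move/hc/ha.
Qed.
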